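(* Let $X=\{x_1,\dots,x_n\}$ be a finite set of alternatives, let $k\ge 1$ be an integer, let $\mathcal{B}=\{B_1,\dots,B_m\}$ be a collection of non-empty subsets of $X$ and let $\bm{c}$ be a choice function on $\mathcal{B}$ (i.e. $\bm{c}(B_i)\in B_i$). Write $b_i=|B_i|$. Then $(\mathcal{B},\bm{c})$ is rationalizable with $k^{th}$-order choice under limited attention if and only if there exist real numbers $u_1,\dots,u_n>0$ (one for each alternative), binary numbers $\delta_{ij}\in\{0,1\}$ ($i=1,\dots,m$, $j=1,\dots,n$), and a constant $M>0$ (the ''big-$M$'', taken arbitrarily large, so that a constraint with a term $(1-\delta_{ij})M$ is void when $\delta_{ij}=0$) such that: (1) for every $i$ and every $x_j\in B_i$ with $x_j\neq \bm{c}(B_i)$, writing $\bm{c}(B_i)=x_l$: $u_l> u_j-(1-\delta_{ij})M$; (2) $\delta_{ij}=0$ whenever $x_j\notin B_i$; (3) for all $i,j$ with $\bm{c}(B_i)\ne\bm{c}(B_j)$ and $\bm{c}(B_i),\bm{c}(B_j)\in B_i\cap B_j$: $\sum_{x_l\in B_i\setminus B_j}\delta_{il}+\sum_{x_l\in B_j\setminus B_i}\delta_{jl}\ge 1$; (4) for every $i$: $\sum_{x_j\in B_i}\delta_{ij}\ge\min\{k,b_i\}$.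
   Context: A strict preference relation on $X$ is a complete, transitive and asymmetric binary relation $\succ$. An attention filter is a map $\Gamma$ from non-empty subsets of $X$ to subsets of $X$ such that $\Gamma(B)\subseteq B$ for every $B$, and $\Gamma(B)=\Gamma(B\setminus\{x\})$ for every $B$ and every $x\in B\setminus\Gamma(B)$. A data set $(\mathcal{B},\bm{c})$ is rationalizable with $k^{th}$-order choice under limited attention if there exist a strict preference relation $\succ$ and an attention filter $\Gamma$ with $|\Gamma(B)|\ge\min\{|B|,k\}$ for all non-empty $B\subseteq X$, such that for every $B\in\mathcal{B}$, $\bm{c}(B)$ is the $\succ$-maximal element of $\Gamma(B)$. (Intended interpretation: $\delta_{ij}=1$ iff $x_j\in\Gamma(B_i)$, and $u_j$ is a utility of $x_j$.) *)

(* Defs.v *)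
From mathcomp Require Import all_boot all_order all_algebra.
Set Implicit Arguments. Unset Strict Implicit. Unset Printing Implicit Defensive.
Import Order.TTheory GRing.Theory Num.Theory.

Section Defs.
Variable T : finType.

Definition strict_pref (P : rel T) : Prop :=
  [/\ (forall x y, x != y -> P x y \/ P y x),
      (forall x y z, P x y -> P y z -> P x z) &
      (forall x y, P x y -> ~~ P y x)].

Definition attention_filter (G : {set T} -> {set T}) : Prop :=
  (forall B, G B \subset B) /\
  (forall (B : {set T}) (x : T), x \in B -> x \notin G B -> G B = G (B :\ x)).

Definition is_max (P : rel T) (A : {set T}) (x : T) : Prop :=
  x \in A /\ (forall y, y \in A -> y != x -> P x y).

Definition rationalizable_k (k : nat) (Bs : {set {set T}}) (c : {set T} -> T)
  : Prop :=
  exists (P : rel T) (G : {set T} -> {set T}),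
    [/\ strict_pref P, attention_filter G,
        (forall B, B != set0 -> minn #|B| k <= #|G B|) &
        (forall B, B \in Bs -> is_max P (G B) (c B))].
End Defs.

(* Main.v *)
Require Import Defs.
From mathcomp Require Import all_boot all_order all_algebra.
Import Order.TTheory GRing.Theory Num.Theory.
Set Implicit Arguments. Unset Strict Implicit.
Lemma sum_bool_card (T : finType) (A : {set T}) (f : T -> bool) :
  (\sum_(x in A) (f x : nat))%N = #|[set x in A | f x]|.
Proof.
rewrite -sum1_card big_mkcond /= [RHS]big_mkcond /=.
apply: eq_bigr => x _; rewrite inE; by case: (x \in A); case: (f x).
Qed.

Lemma af_remove (T : finType) (G : {set T} -> {set T}) :
  attention_filter G -> forall n (D B : {set T}), #|D| = n -> D \subset B ->
  (forall x, x \in D -> x \notin G B) -> G B = G (B :\: D).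
Proof.
move=> [_ HG]; elim=> [|n IH] D B HD DB Hn.
  move/eqP: HD; rewrite cards_eq0 => /eqP ->; by rewrite setD0.
have [x xD] : exists x, x \in D.
  apply/set0Pn; by rewrite -card_gt0 HD.
have xB : x \in B by apply: (subsetP DB).
have E1 := HG B x xB (Hn x xD).
have -> : B :\: D = (B :\ x) :\: (D :\ x).
  apply/setP => y; rewrite !inE; case: (eqVneq y x) => [->|//]; by rewrite xD.
rewrite E1; apply: IH.
- by move: HD; rewrite (cardsD1 x) xD add1n => -[].
- apply/subsetP => y; rewrite !inE => /andP[-> /(subsetP DB) ->]; by [].
- move=> y; rewrite inE -E1 => /andP[_]; exact: Hn.
Qed.
Local Open Scope ring_scope.

Lemma max_uniq (T : finType) (P : rel T) A x y :
  strict_pref P -> is_max P A x -> is_max P A y -> x = y.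
Proof.
move=> [_ _ Has] [xA Hx] [yA Hy]; case: (eqVneq x y) => // nxy.
have h1 := Hy x xA nxy; rewrite eq_sym in nxy; have h2 := Hx y yA nxy.
by move: (Has _ _ h1); rewrite h2.
Qed.

Lemma fwd (R : realFieldType) (T : finType) (k : nat)
  (Bs : {set {set T}}) (c : {set T} -> T) :
  (forall B, B \in Bs -> B != set0) ->
  rationalizable_k k Bs c ->
  exists (u : T -> R) (delta : {set T} -> T -> bool) (M : R),
    [/\ (forall x, 0 < u x) /\ 0 < M,
        (forall B x, B \in Bs -> x \in B -> x != c B ->
           u x - (1 - (delta B x)%:R) * M < u (c B)),
        (forall B x, B \in Bs -> x \notin B -> delta B x = false),
        (forall B B', B \in Bs -> B' \in Bs -> c B != c B' ->
           c B \in B :&: B' -> c B' \in B :&: B' ->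
           (1 <= \sum_(x in B :\: B') delta B x
                 + \sum_(x in B' :\: B) delta B' x)%N) &
        (forall B, B \in Bs ->
           (minn k #|B| <= \sum_(x in B) delta B x)%N)].
Proof.
move=> Bne [P [G [SP AF Hsz Hmax]]].
have [Pcomp Ptr Pas] := SP.
have Pirr x : ~~ P x x by apply/negP => h; move: (Pas _ _ h); rewrite h.
pose u x : R := (#|[set y | P x y]|)%:R + 1.
have Pu x y : P x y -> u y < u x.
  move=> hxy; rewrite /u ltrD2r ltr_nat; apply: proper_card.
  rewrite properE; apply/andP; split.
    apply/subsetP => z; rewrite !inE => hyz; exact: Ptr hxy hyz.
  apply/subsetPn; exists y; by rewrite !inE // (negbTE (Pirr y)).
have ule x : u x <= (#|T|)%:R + 1.
  by rewrite /u lerD2r ler_nat max_card.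
have upos x : 0 < u x by rewrite /u ltr_pwDr // ler0n.
exists u, (fun B x => x \in G B), ((#|T|)%:R + 1); split.
- split => //; by rewrite ltr_pwDr // ler0n.
- move=> B x BB xB xc; case: (boolP (x \in G B)) => xG /=.
    rewrite subrr mul0r subr0; apply: Pu; exact: (Hmax B BB).2 x xG xc.
  rewrite subr0 mul1r; apply: le_lt_trans (upos (c B)).
  by rewrite subr_le0.
- move=> B x _ xB; apply/negP => xG; move: xB; by rewrite (subsetP (AF.1 B) x xG).
- move=> B B' BB BB' ncc cI cI'; rewrite lt0n addn_eq0 !sum_nat_eq0.
  apply/negP => /andP[/forallP h1 /forallP h2].
  have e1 : G B = G (B :&: B').
    rewrite -[in RHS](set0U (B :&: B')) -(setDv B) -setDDr.
    apply: (af_remove AF (erefl _)); first exact: subsetDl.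
    move=> x xD; move: (h1 x); by rewrite xD /= eqb0.
  have e2 : G B' = G (B :&: B').
    rewrite setIC -[in RHS](set0U (B' :&: B)) -(setDv B') -setDDr.
    apply: (af_remove AF (erefl _)); first exact: subsetDl.
    move=> x xD; move: (h2 x); by rewrite xD /= eqb0.
  have m1 := Hmax B BB; have m2 := Hmax B' BB'.
  rewrite e1 in m1; rewrite e2 in m2.
  by move: ncc; rewrite (max_uniq SP m1 m2) eqxx.
- move=> B BB; rewrite sum_bool_card.
  have -> : [set x in B | x \in G B] = G B.
    apply/setP => x; rewrite inE; case: (boolP (x \in G B)) => h; last by rewrite andbF.
    by rewrite (subsetP (AF.1 B) x h).
  rewrite minnC; exact: Hsz _ (Bne B BB).
Qed.
Lemma bwd (R : realFieldType) (T : finType) (k : nat)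
  (Bs : {set {set T}}) (c : {set T} -> T) :
  (forall B, B \in Bs -> c B \in B) ->
  (exists (u : T -> R) (delta : {set T} -> T -> bool) (M : R),
    [/\ (forall x, 0 < u x) /\ 0 < M,
        (forall B x, B \in Bs -> x \in B -> x != c B ->
           u x - (1 - (delta B x)%:R) * M < u (c B)),
        (forall B x, B \in Bs -> x \notin B -> delta B x = false),
        (forall B B', B \in Bs -> B' \in Bs -> c B != c B' ->
           c B \in B :&: B' -> c B' \in B :&: B' ->
           (1 <= \sum_(x in B :\: B') delta B x
                 + \sum_(x in B' :\: B) delta B' x)%N) &
        (forall B, B \in Bs ->
           (minn k #|B| <= \sum_(x in B) delta B x)%N)]) ->
  rationalizable_k k Bs c.
Proof. Set Ltac Backtrace.
move=> cin [u [delta [M [[upos Mpos] H1 H2 H3 H4]]]].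
pose r (x : T) : nat := nat_of_ord (enum_rank x).
pose P : rel T := fun x y => (u y < u x) || ((u y == u x) && (r y < r x)%N).
have SP : strict_pref P.
  split.
  - move=> x y nxy; rewrite /P.
    have nr : r x != r y.
      apply: contra nxy => /eqP h; apply/eqP; apply: enum_rank_inj; exact: val_inj.
    case: (ltgtP (u x) (u y)) => h; [by right|by left|].
    rewrite ?h ?eqxx ?ltxx /=; case: (ltngtP (r x) (r y)) => h'; [by right|by left|].
    by rewrite h' eqxx in nr.
  - move=> x y z; rewrite /P.
    case/orP => [h1|/andP[/eqP e1 h1]]; case/orP => [h2|/andP[/eqP e2 h2]].
    + by rewrite (lt_trans h2 h1).
    + by rewrite e2 h1.
    + by rewrite -e1 h2.
    + by rewrite e2 e1 eqxx (ltn_trans h2 h1) orbT.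
  - move=> x y; rewrite /P; case/orP => [h|/andP[/eqP e h]].
      by rewrite (lt_gtF h) (gt_eqF h).
    by rewrite e ltxx eqxx /= ltnNge ltnW.
have [Pcomp Ptr Pas] := SP.
have Pirr x : ~~ P x x by apply/negP => h; move: (Pas _ _ h); rewrite h.
have uP x y : u y < u x -> P x y by rewrite /P => ->.
pose D (B : {set T}) := [set x in B | delta B x] :|: [set c B].
pose wit (S B : {set T}) := [&& B \in Bs, D B \subset S & S \subset B].
have witc S B1 B2 : wit S B1 -> wit S B2 -> c B1 = c B2.
  case/and3P => b1 d1 s1; case/and3P => b2 d2 s2.
  case: (eqVneq (c B1) (c B2)) => // ne.
  have cD B : c B \in D B by rewrite !inE eqxx orbT.
  have c1 : c B1 \in B1 :&: B2.
    by rewrite inE (subsetP s1 _ (subsetP d1 _ (cD B1))) (subsetP s2 _ (subsetP d1 _ (cD B1))).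
  have c2 : c B2 \in B1 :&: B2.
    by rewrite inE (subsetP s1 _ (subsetP d2 _ (cD B2))) (subsetP s2 _ (subsetP d2 _ (cD B2))).
  move: (H3 _ _ b1 b2 ne c1 c2); rewrite lt0n addn_eq0 !sum_nat_eq0.
  case/negP; apply/andP; split; apply/forallP => x; apply/implyP; rewrite inE => /andP[xn xB];
    rewrite eqb0; apply/negP => dx.
  - have : x \in D B1 by rewrite !inE xB dx.
    by move/(subsetP d1)/(subsetP s2); rewrite (negbTE xn).
  - have : x \in D B2 by rewrite !inE xB dx.
    by move/(subsetP d2)/(subsetP s1); rewrite (negbTE xn).
have DnP B x : B \in Bs -> x \in D B -> ~~ P x (c B).
  move=> BB; rewrite !inE => /orP[/andP[xB dx]|/eqP ->]; last exact: Pirr.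
  case: (eqVneq x (c B)) => [->|ne]; first exact: Pirr.
  have := H1 B x BB xB ne; rewrite dx subrr mul0r subr0 => /uP /Pas //.
pose G (S : {set T}) := if [pick B | wit S B] is Some B then [set y in S | ~~ P y (c B)] else S.
have GS S : G S \subset S.
  rewrite /G; case: pickP => [B _|_]; last exact: subxx.
  apply/subsetP => y; rewrite inE; by case/andP.
exists P, G; split => //.
- split => // S x xS; rewrite /G; case: pickP => [B wB|_]; last by rewrite xS.
  rewrite inE xS /= negbK => Px.
  have wB' : wit (S :\ x) B.
    case/and3P: wB => BB dB sB; rewrite /wit BB /=; apply/andP; split.
      apply/subsetP => y yD; rewrite !inE (subsetP dB _ yD) andbT.
      apply: contraNneq (DnP B y BB yD) => ->; exact Px.
    apply: subset_trans sB; exact: subsetDl.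
  case: pickP => [B1 wB1|]; last by move/(_ B); rewrite wB'.
  rewrite (witc _ _ _ wB1 wB').
  apply/setP => y; rewrite !inE; case: (eqVneq y x) => [->|ne]; by rewrite ?Px ?ne ?eqxx ?andbF.
- move=> S Sne; rewrite /G; case: pickP => [B wB|_]; last by rewrite geq_minl.
  case/and3P: wB => BB dB sB.
  apply: (@leq_trans (minn k #|B|)).
    by rewrite leq_min geq_minr (leq_trans (geq_minl _ _) (subset_leq_card sB)).
  apply: leq_trans (H4 B BB) _.
  rewrite sum_bool_card; apply: subset_leq_card; apply/subsetP => y; rewrite inE => /andP[yB dy].
  have yD : y \in D B by rewrite !inE yB dy.
  by rewrite inE (subsetP dB _ yD) (DnP B y BB yD).
- move=> B BB.
  have wBB : wit B B by rewrite /wit BB subxx andbT; apply/subsetP => y; rewrite !inE => /orP[/andP[]//|/eqP ->]; exact: cin.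
  rewrite /G; case: pickP => [B1 wB1|]; last by move/(_ B); rewrite wBB.
  rewrite (witc _ _ _ wB1 wBB); split.
    by rewrite inE cin // Pirr.
  move=> y; rewrite inE => /andP[_ nP] ne.
  by case: (Pcomp y (c B) ne) => // h; rewrite h in nP.
Qed.

Unset Implicit Arguments.
Theorem theorem2 (R : realFieldType) (T : finType) (k : nat)
  (Bs : {set {set T}}) (c : {set T} -> T) :
  (1 <= k)%N ->
  (forall B, B \in Bs -> B != set0) ->
  (forall B, B \in Bs -> c B \in B) ->
  rationalizable_k k Bs c <->
  exists (u : T -> R) (delta : {set T} -> T -> bool) (M : R),
    [/\ (forall x, 0 < u x) /\ 0 < M,
        (* (1) *)
        (forall B x, B \in Bs -> x \in B -> x != c B ->
           u x - (1 - (delta B x)%:R) * M < u (c B)),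
        (* (2) *)
        (forall B x, B \in Bs -> x \notin B -> delta B x = false),
        (* (3) *)
        (forall B B', B \in Bs -> B' \in Bs -> c B != c B' ->
           c B \in B :&: B' -> c B' \in B :&: B' ->
           (1 <= \sum_(x in B :\: B') delta B x
                 + \sum_(x in B' :\: B) delta B' x)%N) &
        (* (4) *)
        (forall B, B \in Bs ->
           (minn k #|B| <= \sum_(x in B) delta B x)%N)].
Proof.
move=> _ Bne cin; split; [exact: fwd | exact: bwd].
Qed.
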